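(* Consider the one-state softmax setting in the context, with the update $\theta_{t+1} = \theta_t + \eta_t(\hat r_t - \hat b_t)$ and on-policy sampling $a_t\sim\pi_{\theta_t}(\cdot)$. (1) If $\hat r_t(a) = \frac{\mathbb{I}\{a_t = a\}}{\pi_{\theta_t}(a)} r(a)$ (true mean reward observed) and $\eta_t = \eta > 0$ is constant, then for all $t\ge1$: $\pi_{\theta_{t+1}}^\top r - \pi_{\theta_t}^\top r \ge 0$ almost surely, and $$\mathbb{E}_t[\pi_{\theta_{t+1}}^\top r] - \pi_{\theta_t}^\top r \ge \frac{\eta}{1+\eta}\,\pi_{\theta_t}(a^* )\left(r(a^* ) - \pi_{\theta_t}^\top r\right)^2,$$ where $\mathbb{E}_t$ is over the sampling of $a_t\sim\pi_{\theta_t}(\cdot)$. (2) If $\hat r_t(a) = \frac{\mathbb{I}\{a_t = a\}}{\pi_{\theta_t}(a)} x_t(a)$ (sampled reward observed) and $\eta_t = \frac{\pi_{\theta_t}(a_t)\,|r(a_t) - \pi_{\theta_t}^\top r|}{8R_{\max}^2}$, then for all $t\ge 1$, $$\mathbb{E}_t[\pi_{\theta_{t+1}}^\top r] - \pi_{\theta_t}^\top r \ge \frac{1}{16 R_{\max}^2}\sum_{i=1}^K \pi_{\theta_t}(i)^2\left|r(i) - \pi_{\theta_t}^\top r\right|^3 \ge \frac{1}{16R_{\max}^2}\cdot\frac{\Delta}{K-1}\cdot\pi_{\theta_t}(a^* )^2\left(r(a^* ) - \pi_{\theta_t}^\top r\right)^2,$$ where $\mathbb{E}_t$ is over the sampling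 of $a_t\sim\pi_{\theta_t}(\cdot)$ and of the reward $x_t(a_t)\sim R_{a_t}$ given $\theta_t$.
   Context: Let $K\ge 2$, $r\in[0,1]^K$, $a^*\in\arg\max_a r(a)$, $\Delta := r(a^* ) - \max_{a\ne a^*} r(a)$. Softmax policy $\pi_\theta(a) = e^{\theta(a)}/\sum_{a'}e^{\theta(a')}$. For each action $a$, $R_a$ is a reward distribution supported on $[-R_{\max},R_{\max}]$ ($R_{\max}>0$) with mean $r(a)$. At iteration $t$, $a_t\sim\pi_{\theta_t}(\cdot)$ is sampled; in the sampled-reward case a reward $x_t(a_t)\sim R_{a_t}$ is observed and $x_t(a) := 0$ for $a\ne a_t$. The baseline vector is $\hat b_t(a) = \left(\frac{\mathbb{I}\{a_t=a\}}{\pi_{\theta_t}(a)} - 1\right)\pi_{\theta_t}^\top r$. *)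

(* Defs.v *)
From HB Require Import structures.
From mathcomp Require Import all_boot all_order all_algebra.
From mathcomp Require Import all_classical all_reals all_analysis.
Set Implicit Arguments. Unset Strict Implicit. Unset Printing Implicit Defensive.
Import Order.TTheory GRing.Theory Num.Theory.
Local Open Scope ring_scope.

Section Softmax.
Variables (R : realType) (K : nat).

Definition softmax (th : 'I_K -> R) (a : 'I_K) : R :=
  expR (th a) / \sum_(a' < K) expR (th a').

Definition pr (th : 'I_K -> R) (r : 'I_K -> R) : R :=
  \sum_(a < K) softmax th a * r a.

Definition ind (s a : 'I_K) : R := if s == a then 1 else 0.

Definition baseline (th : 'I_K -> R) (r : 'I_K -> R) (s a : 'I_K) : R :=
  (ind s a / softmax th a - 1) * pr th r.

Definition iw (th : 'I_K -> R) (s : 'I_K) (y : 'I_K -> R) (a : 'I_K) : R :=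
  ind s a / softmax th a * y a.

Definition upd (th : 'I_K -> R) (eta : R) (rhat bhat : 'I_K -> R) : 'I_K -> R :=
  fun a => th a + eta * (rhat a - bhat a).

Definition upd_mean (th r : 'I_K -> R) (eta : R) (s : 'I_K) : 'I_K -> R :=
  upd th eta (iw th s r) (baseline th r s).

Definition xvec (s : 'I_K) (x : R) : 'I_K -> R := fun a => if a == s then x else 0.

Definition eta_adapt (th r : 'I_K -> R) (Rmax : R) (s : 'I_K) : R :=
  softmax th s * `|r s - pr th r| / (8 * Rmax ^+ 2).

Definition upd_sampled (th r : 'I_K -> R) (Rmax : R) (s : 'I_K) (x : R) : 'I_K -> R :=
  upd th (eta_adapt th r Rmax s) (iw th s (xvec s x)) (baseline th r s).

(* reward gap Delta = r(astar) - max_{a <> astar} r(a)  (the max is seeded with 0,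
   harmless since r >= 0 and K >= 2 makes the index set nonempty) *)
Definition gap (r : 'I_K -> R) (astar : 'I_K) : R :=
  r astar - \big[Num.max/(0 : R)]_(a < K | a != astar) r a.

End Softmax.

(* Main.v *)
Require Import Defs.
From HB Require Import structures.
From mathcomp Require Import all_boot all_order all_algebra.
From mathcomp Require Import all_classical all_reals all_analysis.
From mathcomp.algebra_tactics Require Import ring lra.
Import Order.TTheory GRing.Theory Num.Theory.
Import numFieldNormedType.Exports.
Local Open Scope ring_scope.

Lemma sumexp_gt0 {R : realType} {K : nat} (th : 'I_K -> R) (a : 'I_K) :
  0 < \sum_(a' < K) expR (th a').
Proof.
rewrite (bigD1 a) //=.
have h1 := expR_gt0 (th a).
have h2 : 0 <= \sum_(i < K | i != a) expR (th i) by apply: sumr_ge0 => i _; exact: expR_ge0.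
lra.
Qed.

Lemma softmax_gt0 {R : realType} {K : nat} (th : 'I_K -> R) (a : 'I_K) :
  0 < softmax th a.
Proof. by rewrite /softmax divr_gt0 // ?expR_gt0 // (sumexp_gt0 th a). Qed.

Lemma sum_softmax {R : realType} {K : nat} (th : 'I_K -> R) (a : 'I_K) :
  \sum_(i < K) softmax th i = 1.
Proof.
rewrite /softmax -mulr_suml mulfV //; exact/lt0r_neq0/(sumexp_gt0 th a).
Qed.

Lemma prE {R : realType} {K : nat} (th r : 'I_K -> R) :
  pr th r = (\sum_(a < K) expR (th a) * r a) / \sum_(a < K) expR (th a).
Proof.
rewrite /pr /softmax mulr_suml; apply: eq_bigr => i _; rewrite mulrAC.
by [].
Qed.

Lemma pr_shift {R : realType} {K : nat} (th th' r : 'I_K -> R) (s : 'I_K) (c k : R) :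
  (forall a, th' a = th a + k + (if a == s then c else 0)) ->
  pr th' r = pr th r + softmax th s * (expR c - 1) * (r s - pr th r)
                        / (1 + softmax th s * (expR c - 1)).
Proof.
move=> hth.
have E1 : forall a, expR (th' a) = expR k * (expR (th a) + (if a == s then expR (th s) * (expR c - 1) else 0)).
  move=> a; rewrite hth !expRD; case: (eqVneq a s) => [->|/negbTE h]; rewrite ?eqxx ?h ?expR0; ring.
set S := \sum_(a < K) expR (th a).
set A := \sum_(a < K) expR (th a) * r a.
set q := expR (th s).
have hS : \sum_(a < K) expR (th' a) = expR k * (S + q * (expR c - 1)).
  rewrite (eq_bigr _ (fun a _ => E1 a)) -mulr_sumr big_split /=; congr (_ * (_ + _)).
  by rewrite (bigD1 s) //= eqxx big1 ?addr0 // => i /negbTE ->.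
have hA : \sum_(a < K) expR (th' a) * r a = expR k * (A + q * (expR c - 1) * r s).
  rewrite (eq_bigr _ (fun a _ => congr1 (fun z => z * r a) (E1 a))).
  rewrite (eq_bigr (fun a => expR k * (expR (th a) * r a + (if a == s then q * (expR c - 1) * r s else 0)))); last first.
    by move=> i _; case: (eqVneq i s) => [->|/negbTE h]; rewrite ?eqxx ?h /q; ring.
  rewrite -mulr_sumr big_split /=; congr (_ * (_ + _)).
  by rewrite (bigD1 s) //= eqxx big1 ?addr0 // => i /negbTE ->.
have Spos : 0 < S := sumexp_gt0 th s.
have qpos : 0 < q := expR_gt0 _.
have Sq : q <= S.
  rewrite /S (bigD1 s) //= -/q.
  have : 0 <= \sum_(i < K | i != s) expR (th i) by apply: sumr_ge0 => i _; exact: expR_ge0.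
  lra.
have ec := expR_gt0 c.
have D : 0 < S + q * (expR c - 1).
  have : 0 < q * expR c by apply: mulr_gt0.
  nra.
have ek := expR_gt0 k.
rewrite !prE hS hA -/S -/A /softmax -/S -/q.
field.
by rewrite !lt0r_neq0.
Qed.

Lemma pr_le {R : realType} {K : nat} (th r : 'I_K -> R) (a0 : 'I_K) (hi : R) :
  (forall a, r a <= hi) -> pr th r <= hi.
Proof.
move=> h; rewrite /pr.
have -> : hi = \sum_(a < K) softmax th a * hi by rewrite -mulr_suml (sum_softmax th a0) mul1r.
apply: ler_sum => a _; apply: ler_wpM2l; [exact/ltW/softmax_gt0 | exact: h].
Qed.

Lemma pr_ge {R : realType} {K : nat} (th r : 'I_K -> R) (a0 : 'I_K) (lo : R) :
  (forall a, lo <= r a) -> lo <= pr th r.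
Proof.
move=> h; rewrite /pr.
have -> : lo = \sum_(a < K) softmax th a * lo by rewrite -mulr_suml (sum_softmax th a0) mul1r.
apply: ler_sum => a _; apply: ler_wpM2l; [exact/ltW/softmax_gt0 | exact: h].
Qed.

Lemma upd_mean_shift {R : realType} {K : nat} (th r : 'I_K -> R) eta s a :
  upd_mean th r eta s a = th a + eta * pr th r +
     (if a == s then eta * (r s - pr th r) / softmax th s else 0).
Proof.
have hp := lt0r_neq0 (softmax_gt0 th s).
rewrite /upd_mean /upd /iw /baseline /ind eq_sym.
case: (eqVneq a s) => [->|_] /=; last by rewrite !mul0r; ring.
by field.
Qed.

Lemma upd_sampled_shift {R : realType} {K : nat} (th r : 'I_K -> R) Rmax s x a :
  upd_sampled th r Rmax s x a = th a + eta_adapt th r Rmax s * pr th r +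
     (if a == s then eta_adapt th r Rmax s * (x - pr th r) / softmax th s else 0).
Proof.
have hp := lt0r_neq0 (softmax_gt0 th s).
rewrite /upd_sampled /upd /iw /baseline /ind /xvec eq_sym.
case: (eqVneq a s) => [->|_] /=; last by rewrite !mul0r; ring.
by field.
Qed.

Lemma softmax_le1 {R : realType} {K : nat} (th : 'I_K -> R) (a : 'I_K) :
  softmax th a <= 1.
Proof.
rewrite -(sum_softmax th a) (bigD1 a) //= lerDl.
by apply: sumr_ge0 => i _; exact/ltW/softmax_gt0.
Qed.

Lemma expR_quad {R : realType} (t : R) : t <= 1/4 -> expR t <= 1 + t + t ^+ 2.
Proof.
move=> ht.
have h1 := expR_ge1Dx (- (t / 2)).
have e2 : expR t = expR (t / 2) ^+ 2 by rewrite expr2 -expRD; congr expR; field.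
have hpos : 0 < 1 - t / 2 by lra.
have eh : expR (t / 2) <= (1 - t / 2)^-1.
  rewrite expRN in h1.
  have hg := expR_gt0 (t / 2).
  by rewrite -[expR (t / 2)]invrK lef_pV2 ?posrE ?invr_gt0.
have hi : 0 < (1 - t / 2)^-1 by rewrite invr_gt0.
apply: (le_trans (y := ((1 - t / 2)^-1) ^+ 2)).
  by rewrite e2 ler_pXn2r // ?nnegrE ?expR_ge0 ?ltW.
have -> : (1 - t / 2)^-1 ^+ 2 = 1 / ((1 - t/2) ^+ 2) by rewrite exprVn div1r.
rewrite ler_pdivrMr ?exprn_gt0 //.
have : 0 <= t ^+ 2 * (1 - 3 * t + t ^+ 2).
  apply: mulr_ge0; first exact: sqr_ge0.
  nra.
move=> hh; have -> : (1 + t + t ^+ 2) * (1 - t / 2) ^+ 2 = 1 + t ^+ 2 * (1 - 3 * t + t ^+ 2) / 4 by field.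
lra.
Qed.

Lemma one_plus_pos {R : realType} {p : R} (c : R) : 0 < p -> p <= 1 -> 0 < 1 + p * (expR c - 1).
Proof.
move=> hp hp1; have := expR_gt0 c => he.
have : 0 < p * expR c by apply: mulr_gt0.
nra.
Qed.

Lemma part1 {R : realType} {K : nat} (r : 'I_K -> R) (hr : forall a, 0 <= r a <= 1)
  (astar : 'I_K) (hastar : forall a, r a <= r astar) (th : 'I_K -> R) (eta : R) (heta : 0 < eta) :
  ((forall s : 'I_K, pr (upd_mean th r eta s) r - pr th r >= 0) /\
   \sum_(s < K) softmax th s * pr (upd_mean th r eta s) r - pr th r
     >= eta / (1 + eta) * softmax th astar * (r astar - pr th r) ^+ 2).
Proof.
set P := pr th r.
have hs : forall s, pr (upd_mean th r eta s) r - P =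
   softmax th s * (expR (eta * (r s - P) / softmax th s) - 1) * (r s - P)
    / (1 + softmax th s * (expR (eta * (r s - P) / softmax th s) - 1)).
  move=> s; rewrite (pr_shift th (upd_mean th r eta s) r s (eta * (r s - P) / softmax th s) (eta * P)).
    by rewrite -/P addrAC subrr add0r.
  by move=> a; rewrite upd_mean_shift.
have nonneg : forall s, 0 <= pr (upd_mean th r eta s) r - P.
  move=> s; rewrite hs.
  have hp := softmax_gt0 th s; have hp1 := softmax_le1 th s.
  set c := eta * (r s - P) / softmax th s.
  have Z := one_plus_pos c hp hp1.
  apply: divr_ge0; last exact: ltW.
  rewrite -mulrA; apply: mulr_ge0; first exact: ltW.
  have [hd|hd] := lerP 0 (r s - P).
    have c0 : 0 <= c by rewrite /c; apply: divr_ge0; [apply: mulr_ge0; [exact: ltW|] | exact: ltW].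
    have := expR_ge1Dx c; move=> h; apply: mulr_ge0 => //; lra.
  have c0 : c <= 0.
    rewrite /c; apply: mulr_le0_ge0; [apply: mulr_ge0_le0; [exact: ltW| exact: ltW] | by rewrite invr_ge0 ltW].
  have : expR c <= 1 by rewrite expR_le1.
  move=> h; apply: mulr_le0; lra.
split => //.
have sum1 := sum_softmax th astar.
have -> : \sum_(s < K) softmax th s * pr (upd_mean th r eta s) r - P =
          \sum_(s < K) softmax th s * (pr (upd_mean th r eta s) r - P).
  under [RHS]eq_bigr do rewrite mulrBr.
  by rewrite sumrB -mulr_suml sum1 mul1r.
rewrite (bigD1 astar) //=.
have rest : 0 <= \sum_(i < K | i != astar) softmax th i * (pr (upd_mean th r eta i) r - P).
  by apply: sumr_ge0 => i _; apply: mulr_ge0; [exact/ltW/softmax_gt0 | exact: nonneg].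
suff : eta / (1 + eta) * softmax th astar * (r astar - P) ^+ 2 <=
       softmax th astar * (pr (upd_mean th r eta astar) r - P) by lra.
rewrite hs.
set p := softmax th astar; set d := r astar - P.
have hp : 0 < p := softmax_gt0 th astar.
have hp1 : p <= 1 := softmax_le1 th astar.
have d0 : 0 <= d by rewrite /d subr_ge0 /P (pr_le th r astar (r astar) hastar).
have d1 : d <= 1.
  have : 0 <= P by rewrite /P (pr_ge th r astar 0) // => a; case/andP: (hr a).
  have := hr astar; case/andP => _ h; rewrite /d; lra.
set c := eta * d / p.
have hu := expR_ge1Dx c.
set u := expR c - 1.
have pu : eta * d <= p * u.
  have -> : eta * d = p * c by rewrite /c; field; exact: lt0r_neq0.
  rewrite ler_pM2l //; rewrite /u; lra.
have Z : 0 < 1 + p * u := one_plus_pos c hp hp1.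
have pu0 : 0 <= p * u by apply: le_trans pu; apply: mulr_ge0 => //; exact: ltW.
have e1 : eta * d * d <= p * u * d by apply: ler_wpM2r.
have e2 : eta * (d ^+ 2 * (p * u)) <= eta * (p * u * d).
  apply: ler_wpM2l; first exact: ltW.
  have := mulr_ge0 (mulr_ge0 d0 pu0) (_ : 0 <= 1 - d); last by lra.
have key : 0 <= (1 + eta) * (p * u * d) - eta * (d ^+ 2 * (1 + p * u)).
  have -> : (1 + eta) * (p * u * d) = p * u * d + eta * (p * u * d) by ring.
  have -> : eta * (d ^+ 2 * (1 + p * u)) = eta * d * d + eta * (d ^+ 2 * (p * u)) by ring.
  lra.
rewrite -subr_ge0.
have -> : p * (p * u * d / (1 + p * u)) - eta / (1 + eta) * p * d ^+ 2 =
  p * ((1 + eta) * (p * u * d) - eta * (d ^+ 2 * (1 + p * u))) / ((1 + eta) * (1 + p * u)).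
  by field; apply/andP; split; apply: lt0r_neq0 => //; lra.
apply: divr_ge0; first by apply: mulr_ge0 => //; exact: ltW.
by apply: mulr_ge0; apply: ltW => //; lra.
Qed.

Lemma sum_const_ord {R : realType} (K : nat) (c : R) : \sum_(i < K) c = K%:R * c.
Proof. by rewrite sumr_const card_ord mulr_natl. Qed.

Lemma sum_const_neq {R : realType} (K : nat) (j : 'I_K) (c : R) :
  \sum_(i < K | i != j) c = (K%:R - 1) * c.
Proof.
have := sum_const_ord K c; rewrite (bigD1 j) //= => h.
rewrite mulrBl mul1r -h; ring.
Qed.

Lemma cauchy_neq {R : realType} (K : nat) (j : 'I_K) (a : 'I_K -> R) :
  (2 <= K)%N ->
  (\sum_(i < K | i != j) a i) ^+ 2 / (K%:R - 1) <= \sum_(i < K | i != j) a i ^+ 2.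
Proof.
move=> hK.
have n0 : 0 < (K%:R : R) - 1.
  have : (2%:R : R) <= K%:R by rewrite ler_nat.
  lra.
set S := \sum_(i < K | i != j) a i.
set m := S / (K%:R - 1).
have h0 : 0 <= \sum_(i < K | i != j) (a i - m) ^+ 2 by apply: sumr_ge0 => i _; exact: sqr_ge0.
have e : \sum_(i < K | i != j) (a i - m) ^+ 2 =
   \sum_(i < K | i != j) a i ^+ 2 - 2 * m * S + (K%:R - 1) * m ^+ 2.
  rewrite -(sum_const_neq K j) /S mulr_sumr.
  rewrite -sumrB -big_split /=; apply: eq_bigr => i _; ring.
move: h0; rewrite e /m.
have -> : 2 * (S / (K%:R - 1)) * S = 2 * (S ^+ 2 / (K%:R - 1)) by ring.
have -> : (K%:R - 1) * (S / (K%:R - 1)) ^+ 2 = S ^+ 2 / (K%:R - 1) by field; exact: lt0r_neq0.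
lra.
Qed.

Lemma part2b {R : realType} {K : nat} (hK : (2 <= K)%N)
  (r : 'I_K -> R) (hr : forall a, 0 <= r a <= 1)
  (astar : 'I_K) (hastar : forall a, r a <= r astar) (th : 'I_K -> R) :
  gap r astar / (K%:R - 1) * softmax th astar ^+ 2 * (r astar - pr th r) ^+ 2 <=
  \sum_(i < K) softmax th i ^+ 2 * `|r i - pr th r| ^+ 3.
Proof.
set P := pr th r.
have n0 : 1 <= (K%:R : R) - 1.
  have : (2%:R : R) <= K%:R by rewrite ler_nat.
  lra.
set g := gap r astar.
set p := softmax th astar; set d := r astar - P.
have hp : 0 < p := softmax_gt0 th astar.
have d0 : 0 <= d by rewrite /d subr_ge0 /P (pr_le th r astar (r astar) hastar).
have hM : forall i, i != astar -> r i <= r astar - g.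
  move=> i hi; rewrite /g /gap opprB addrC subrK.
  exact: (le_bigmax_cond (P := fun a => a != astar) 0 r hi).
have g0 : 0 <= g.
  rewrite /g /gap subr_ge0.
  apply/bigmax_leP; split; first by case/andP: (hr astar).
  by move=> i _; exact: hastar.
have hdi : forall i, i != astar -> g - d <= `|r i - P|.
  move=> i hi; have := hM i hi; rewrite /d => h.
  have : P - r i <= `|r i - P| by rewrite distrC ler_norm.
  lra.
rewrite (bigD1 astar) //= -/P -/p -/d.
have ad : `|r astar - P| = d by rewrite ger0_norm.
rewrite ad.
have rest0 : 0 <= \sum_(i < K | i != astar) softmax th i ^+ 2 * `|r i - P| ^+ 3.
  by apply: sumr_ge0 => i _; apply: mulr_ge0; [exact: sqr_ge0 | exact: exprn_ge0].
have gK : g / (K%:R - 1) <= g by rewrite ler_pdivrMr; [nra | lra].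
have gK0 : 0 <= g / (K%:R - 1) by apply: divr_ge0 => //; lra.
have p2 : 0 <= p ^+ 2 * d ^+ 2 by apply: mulr_ge0; exact: sqr_ge0.
have [gd|dg] := lerP g d.
  have : g / (K%:R - 1) * (p ^+ 2 * d ^+ 2) <= d * (p ^+ 2 * d ^+ 2).
    by apply: ler_wpM2r => //; lra.
  have -> : d * (p ^+ 2 * d ^+ 2) = p ^+ 2 * d ^+ 3 by ring.
  rewrite !mulrA; lra.
set S := \sum_(i < K | i != astar) softmax th i * `|r i - P|.
have sum0 : \sum_(i < K) softmax th i * (r i - P) = 0.
  under eq_bigr do rewrite mulrBr.
  by rewrite sumrB -mulr_suml (sum_softmax th astar) mul1r subrr.
have hS : p * d <= S.
  move: sum0; rewrite (bigD1 astar) //= -/p -/d => h.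
  have : `|\sum_(i < K | i != astar) softmax th i * (r i - P)| <= S.
    apply: le_trans (ler_norm_sum _ _ _) _.
    apply: ler_sum => i _; rewrite normrM ger0_norm //; exact/ltW/softmax_gt0.
  have -> : \sum_(i < K | i != astar) softmax th i * (r i - P) = - (p * d) by lra.
  by rewrite normrN ger0_norm //; apply: mulr_ge0 => //; exact: ltW.
have S0 : 0 <= p * d by apply: mulr_ge0 => //; exact: ltW.
have cs := cauchy_neq K astar (fun i => softmax th i * `|r i - P|) hK.
rewrite -/S in cs.
have hS2 : (p * d) ^+ 2 <= S ^+ 2 by rewrite ler_pXn2r // ?nnegrE //; exact: le_trans hS.
have step : (g - d) * \sum_(i < K | i != astar) (softmax th i * `|r i - P|) ^+ 2 <=
            \sum_(i < K | i != astar) softmax th i ^+ 2 * `|r i - P| ^+ 3.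
  rewrite mulr_sumr; apply: ler_sum => i hi.
  have -> : softmax th i ^+ 2 * `|r i - P| ^+ 3 = `|r i - P| * (softmax th i * `|r i - P|) ^+ 2 by ring.
  by apply: ler_wpM2r; [exact: sqr_ge0 | exact: hdi].
have gd0 : 0 <= g - d by lra.
have step2 : (g - d) * ((p * d) ^+ 2 / (K%:R - 1)) <=
            (g - d) * \sum_(i < K | i != astar) (softmax th i * `|r i - P|) ^+ 2.
  apply: ler_wpM2l => //; apply: le_trans cs.
  by apply: ler_wpM2r => //; rewrite invr_ge0; lra.
have fin : g / (K%:R - 1) * (p ^+ 2 * d ^+ 2) <=
           p ^+ 2 * d ^+ 3 + (g - d) * ((p * d) ^+ 2 / (K%:R - 1)).
  rewrite -subr_ge0.
  have -> : p ^+ 2 * d ^+ 3 + (g - d) * ((p * d) ^+ 2 / (K%:R - 1)) - g / (K%:R - 1) * (p ^+ 2 * d ^+ 2)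
     = d * (p ^+ 2 * d ^+ 2) * (1 - 1 / (K%:R - 1)) by field; lra.
  apply: mulr_ge0; first by apply: mulr_ge0.
  rewrite subr_ge0 ler_pdivrMr; lra.
have := le_trans step2 step.
move=> h2; apply: (le_trans (y := p ^+ 2 * d ^+ 3 + (g - d) * ((p * d) ^+ 2 / (K%:R - 1)))).
  by rewrite -[_ * _ * d ^+ 2]mulrA.
by rewrite lerD2l.
Qed.
Lemma contF {R : realType} (p d k P : R) : 0 < p -> p <= 1 ->
  continuous (fun x : R => P + p * (expR (k * (x - P)) - 1) * d / (1 + p * (expR (k * (x - P)) - 1))).
Proof.
move=> hp hp1 x.
have cA : {for x, continuous (fun x : R => k * (x - P))}.
  apply: continuousM; first exact: cst_continuous.
  apply: continuousB; [exact: cvg_id | exact: cst_continuous].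
have cE : {for x, continuous (fun x : R => expR (k * (x - P)))}.
  have h := continuous_comp cA (@continuous_expR R _). exact: h.
have cU : {for x, continuous (fun x : R => p * (expR (k * (x - P)) - 1))}.
  apply: continuousM; first exact: cst_continuous.
  apply: continuousB => //; exact: cst_continuous.
have cZ : {for x, continuous (fun x : R => (1 + p * (expR (k * (x - P)) - 1))^-1)}.
  apply: continuousV.
    apply: lt0r_neq0; have := expR_gt0 (k * (x - P)) => he.
    have : 0 < p * expR (k * (x - P)) by apply: mulr_gt0.
    nra.
  apply: continuousD => //; exact: cst_continuous.
apply: (@continuousD _ _ _ (cst P) (fun x : R => p * (expR (k * (x - P)) - 1) * d / (1 + p * (expR (k * (x - P)) - 1)))); first exact: cst_continuous.
apply: continuousM => //.
apply: continuousM => //; exact: cst_continuous.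
Qed.

Lemma int_bound {R : realType} (mu : probability R R) (Rm : R) (hRm : 0 < Rm)
  (hsupp : mu [set x : R | Rm < `|x|]%classic = 0%E)
  (m : R) (hmean : (\int[mu]_x (x%:E) = m%:E)%E)
  (F : R -> R) (al be B : R) :
  measurable_fun setT F -> (forall x, `|F x| <= B) ->
  (forall x, `|x| <= Rm -> al * x + be <= F x) ->
  al * m + be <= Rintegral mu setT F.
Proof.
move=> mF bF lowF.
set N := [set x : R | Rm < `|x|]%classic.
have mN : measurable N.
  have h : measurable_fun setT (fun x : R => Rm < `|x|).
    by apply: measurable_realfun.measurable_fun_ltr => //; exact: measurableT_comp.
  have := h measurableT [set true]%classic I.
  by rewrite setTI; congr measurable; apply/seteqP; split => x /=.
have aeP : forall Q : R -> Prop, (forall x, `|x| <= Rm -> Q x) -> (\forall x \ae mu, Q x).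
  move=> Q hQ; exists N; split => //.
  move=> x /= nQ; rewrite /N /=; rewrite ltNge; apply/negP => hx; exact: nQ (hQ x hx).
have mu1 : mu setT = 1%E := probability_setT mu.
have int_id : mu.-integrable setT (EFin \o (fun x : R => x)).
  apply/integrableP; split; first exact/measurable_realfun.measurable_EFinP.
  apply: (le_lt_trans (integral_le_bound (Rm%:E) _ _ _ _)) => //.
  - exact/measurable_realfun.measurable_EFinP.
  - by rewrite lee_fin ltW.
  - apply: aeP => x hx _ /=; by rewrite lee_fin.
  - apply: lte_mul_pinfty => //; first by rewrite lee_fin ltW.
    exact: (le_lt_trans (probability_le1 mu measurableT) (ltry 1)).
have int_cst : forall c : R, mu.-integrable setT (EFin \o cst c).
  by move=> c; exact: finite_measure_integrable_cst.
have int_F : mu.-integrable setT (EFin \o F).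
  apply: (@le_integrable _ _ _ mu setT measurableT _ (EFin \o cst B)) => //.
  - exact/measurable_realfun.measurable_EFinP.
  - by move=> x _ /=; rewrite lee_fin (le_trans (bF x)) // ler_norm.
have int_ax : mu.-integrable setT (EFin \o (fun x : R => al * x)).
  have := integrableZl measurableT al int_id; congr (integrable _ _ _); apply/funext => x //.
have int_L : mu.-integrable setT (EFin \o (fun x : R => al * x + be)).
  have := integrableD measurableT int_ax (int_cst be); congr (integrable _ _ _); apply/funext => x //.
have mL : measurable_fun setT (fun x : R => al * x + be).
  by apply/measurable_realfun.measurable_EFinP; case/integrableP: int_L.
have RL : Rintegral mu setT (fun x => al * x + be) = al * m + be.
  rewrite RintegralD //.
  rewrite RintegralZl // Rintegral_cst //.
  rewrite /Rintegral /= hmean /=.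
  by rewrite mu1 /= mulr1.
  exact: int_cst be.
rewrite -RL -subr_ge0 -RintegralB //.
set G := (fun x : R => F x - Order.min (F x) (al * x + be)).
have mG : measurable_fun setT G.
  apply: measurable_realfun.measurable_funB => //; exact: measurable_realfun.measurable_minr.
have ae : (\int[mu]_x ((F x - (al * x + be))%:E) = \int[mu]_x ((G x)%:E))%E.
  apply: ae_eq_integral => //.
  - apply/measurable_realfun.measurable_EFinP; exact: measurable_realfun.measurable_funB.
  - exact/measurable_realfun.measurable_EFinP.
  - apply: aeP => x hx _; rewrite /G; congr (_ - _)%:E.
    by rewrite (min_idPr (lowF x hx)).
rewrite /Rintegral ae; apply: fine_ge0; apply: integral_ge0 => x _.
by rewrite lee_fin /G subr_ge0 ge_min lexx.
Qed.

Lemma Rint_cst_prob {R : realType} (mu : probability R R) (c : R) :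
  Rintegral mu setT (fun _ => c) = c.
Proof.
have mu1 : mu setT = 1%E := probability_setT mu.
by rewrite Rintegral_cst //= mu1 /= mulr1.
Qed.

Lemma pointwise {R : realType} (p d Rm P x : R) : 0 < p -> p <= 1 -> 0 < Rm ->
  `|d| <= Rm -> `|x - P| <= 2 * Rm ->
  p * (d * (`|d| / (8 * Rm ^+ 2) * (x - P)) - `|d| * (d ^+ 2 / (16 * Rm ^+ 2))) <=
  p * (expR (`|d| / (8 * Rm ^+ 2) * (x - P)) - 1) * d /
     (1 + p * (expR (`|d| / (8 * Rm ^+ 2) * (x - P)) - 1)).
Proof.
move=> hp hp1 hR hd hx.
set t := `|d| / (8 * Rm ^+ 2) * (x - P).
have R2 : 0 < Rm ^+ 2 by apply: exprn_gt0.
have ad0 : 0 <= `|d| := normr_ge0 d.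
have ht2 : t ^+ 2 <= d ^+ 2 / (16 * Rm ^+ 2).
  rewrite /t exprMn -[d ^+ 2](real_normK (num_real d)).
  have hx2 : (x - P) ^+ 2 <= 4 * Rm ^+ 2.
    rewrite -[(x - P) ^+ 2](real_normK (num_real (x - P))).
    have : `|x - P| ^+ 2 <= (2 * Rm) ^+ 2 by rewrite ler_pXn2r // ?nnegrE // mulr_ge0 // ltW.
    by rewrite exprMn (_ : (2 : R) ^+ 2 = 4) //; rewrite expr2 -natrM.
  have -> : (`|d| / (8 * Rm ^+ 2)) ^+ 2 * (x - P) ^+ 2 =
      `|d| ^+ 2 / (64 * Rm ^+ 2 * Rm ^+ 2) * (x - P) ^+ 2 by field; lra.
  have -> : `|d| ^+ 2 / (16 * Rm ^+ 2) = `|d| ^+ 2 / (64 * Rm ^+ 2 * Rm ^+ 2) * (4 * Rm ^+ 2) by field; lra.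
  apply: ler_wpM2l => //; apply: divr_ge0; [exact: sqr_ge0 | nra].
have htabs : `|t| <= 1/4.
  rewrite /t normrM normrM ger0_norm // (ger0_norm (_ : 0 <= (8 * Rm ^+ 2)^-1)); last first.
    by rewrite invr_ge0; nra.
  have -> : `|d| / (8 * Rm ^+ 2) * `|x - P| = (`|d| * `|x - P|) / (8 * Rm ^+ 2) by rewrite mulrAC.
  rewrite ler_pdivrMr; last nra.
  have : `|d| * `|x - P| <= Rm * (2 * Rm) by apply: ler_pM.
  rewrite expr2; lra.
have := htabs; rewrite ler_norml => /andP[tlo thi].
have e1 := expR_quad t thi.
have e2 := @expR_quad R (- t) ltac:(lra).
have et := expR_gt0 t.
set u := expR t - 1.
have Z : 0 < 1 + p * u by rewrite /u; apply: one_plus_pos.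
have lowh : t - t ^+ 2 <= u / (1 + p * u).
  have eN : expR (- t) = (expR t)^-1 := expRN t.
  have h1 : t - t ^+ 2 <= u / (1 + u).
    have -> : u / (1 + u) = 1 - expR (- t) by rewrite eN /u; field; exact: lt0r_neq0.
    rewrite sqrrN in e2; lra.
  apply: le_trans h1 _.
  rewrite -subr_ge0.
  have -> : u / (1 + p * u) - u / (1 + u) = u ^+ 2 * (1 - p) / ((1 + p * u) * (1 + u)).
    by rewrite /u; field; apply/andP; split; apply: lt0r_neq0 => //; lra.
  apply: divr_ge0; first by apply: mulr_ge0; [exact: sqr_ge0 | lra].
  by apply: mulr_ge0; apply: ltW => //; rewrite /u; lra.
have upph : u / (1 + p * u) <= t + t ^+ 2.
  have : u <= t + t ^+ 2 by rewrite /u; lra.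
  apply: le_trans.
  rewrite -subr_ge0.
  have -> : u - u / (1 + p * u) = p * u ^+ 2 / (1 + p * u) by field; exact: lt0r_neq0.
  apply: divr_ge0; [apply: mulr_ge0; [exact: ltW | exact: sqr_ge0] | exact: ltW].
have key : d * t - `|d| * t ^+ 2 <= d * (u / (1 + p * u)).
  have [d0|d0] := lerP 0 d.
    rewrite ger0_norm // -mulrBr; exact: ler_wpM2l.
  rewrite ltr0_norm // mulNr opprK -mulrDr.
  by rewrite ler_wnM2l //; exact: ltW.
have -> : p * u * d / (1 + p * u) = p * (d * (u / (1 + p * u))) by ring.
apply: ler_wpM2l; first exact: ltW.
apply: le_trans key.
rewrite lerD2l lerN2; apply: ler_wpM2l => //.
Qed.

Lemma part2a {R : realType} {K : nat}
  (r : 'I_K -> R) (hr : forall a, 0 <= r a <= 1)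
  (astar : 'I_K)
  (Rmax : R) (hRmax : 0 < Rmax)
  (Rdist : 'I_K -> probability R R)
  (hsupp : forall a, Rdist a [set x : R | Rmax < `|x|]%classic = 0%E)
  (hmean : forall a, (\int[Rdist a]_x (x%:E) = (r a)%:E)%E)
  (th : 'I_K -> R) :
  \sum_(s < K) softmax th s *
               Rintegral (Rdist s) setT (fun x => pr (upd_sampled th r Rmax s x) r)
    - pr th r >= 1 / (16 * Rmax ^+ 2) *
       \sum_(i < K) softmax th i ^+ 2 * `|r i - pr th r| ^+ 3.
Proof.
set P := pr th r.
have rRm : forall a, r a <= Rmax.
  move=> a.
  have := @int_bound R (Rdist a) Rmax hRmax (hsupp a) (r a) (hmean a) (cst Rmax) 1 0 `|Rmax| (measurable_cst _) (fun x => lexx _).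
  rewrite /cst Rint_cst_prob mul1r addr0; apply => x hx.
  by rewrite mul1r addr0 (le_trans (ler_norm x)).
have P0 : 0 <= P by rewrite /P (pr_ge th r astar 0) // => a; case/andP: (hr a).
have PR : P <= Rmax by rewrite /P (pr_le th r astar Rmax).
have R2 : 0 < Rmax ^+ 2 by apply: exprn_gt0.
have each : forall s, softmax th s ^+ 2 * `|r s - P| ^+ 3 / (16 * Rmax ^+ 2) <=
     softmax th s * (Rintegral (Rdist s) setT (fun x => pr (upd_sampled th r Rmax s x) r) - P).
  move=> s.
  set p := softmax th s; set d := r s - P.
  have hp : 0 < p := softmax_gt0 th s.
  have hp1 : p <= 1 := softmax_le1 th s.
  set k := `|d| / (8 * Rmax ^+ 2).
  have Feq : (fun x => pr (upd_sampled th r Rmax s x) r) =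
      (fun x : R => P + p * (expR (k * (x - P)) - 1) * d / (1 + p * (expR (k * (x - P)) - 1))).
    apply/funext => x.
    rewrite (pr_shift th (upd_sampled th r Rmax s x) r s (eta_adapt th r Rmax s * (x - P) / p) (eta_adapt th r Rmax s * P)); last first.
      by move=> a; rewrite upd_sampled_shift.
    rewrite -/P -/p -/d.
    have -> : eta_adapt th r Rmax s * (x - P) / p = k * (x - P).
      by rewrite /eta_adapt /k -/P -/p -/d; field; apply/andP; split; apply: lt0r_neq0 => //; nra.
    by [].
  have hd : `|d| <= Rmax.
    rewrite /d ler_norml; have := rRm s; have := hr s; case/andP => h0 h1; lra.
  have bnd := @int_bound R (Rdist s) Rmax hRmax (hsupp s) (r s) (hmean s)
     (fun x => pr (upd_sampled th r Rmax s x) r)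
     (p * d * k) (P + p * (- d * k * P - `|d| * (d ^+ 2 / (16 * Rmax ^+ 2)))) 1.
  have hF : forall x, pr (upd_sampled th r Rmax s x) r =
      P + p * (expR (k * (x - P)) - 1) * d / (1 + p * (expR (k * (x - P)) - 1)).
    by move=> x; have := congr1 (fun f => f x) Feq.
  have mF : measurable_fun setT (fun x => pr (upd_sampled th r Rmax s x) r).
    by rewrite Feq; apply: measurable_realfun.continuous_measurable_fun; exact: contF.
  have bF : forall x, `|pr (upd_sampled th r Rmax s x) r| <= 1.
    move=> x; rewrite ger0_norm.
      by apply: (pr_le _ r astar 1) => a; case/andP: (hr a).
    by apply: (pr_ge _ r astar 0) => a; case/andP: (hr a).
  have lF : forall x : R, `|x| <= Rmax -> p * d * k * x +
      (P + p * (- d * k * P - `|d| * (d ^+ 2 / (16 * Rmax ^+ 2)))) <=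
      pr (upd_sampled th r Rmax s x) r.
    move=> x hx; rewrite hF.
    have hxP : `|x - P| <= 2 * Rmax.
      rewrite ler_norml; move: hx; rewrite ler_norml => /andP[h1 h2]; lra.
    have := pointwise p d Rmax P x hp hp1 hRmax hd hxP.
    rewrite -/k => hpw.
    have -> : p * d * k * x + (P + p * (- d * k * P - `|d| * (d ^+ 2 / (16 * Rmax ^+ 2)))) =
       P + p * (d * (k * (x - P)) - `|d| * (d ^+ 2 / (16 * Rmax ^+ 2))) by ring.
    by rewrite lerD2l.
  have lowI := bnd mF bF lF.
  have ad2 : `|d| ^+ 2 = d ^+ 2 := real_normK (num_real d).
  have e : p * d * k * r s + (P + p * (- d * k * P - `|d| * (d ^+ 2 / (16 * Rmax ^+ 2)))) =
     P + p * `|d| ^+ 3 / (16 * Rmax ^+ 2).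
    rewrite /k (_ : r s = d + P); last by rewrite /d subrK.
    rewrite -ad2.
    have dd : d * d = `|d| ^+ 2 by rewrite ad2 expr2.
    have -> : p * d * (`|d| / (8 * Rmax ^+ 2)) * (d + P) + (P + p * (- d * (`|d| / (8 * Rmax ^+ 2)) * P -
      `|d| * (`|d| ^+ 2 / (16 * Rmax ^+ 2)))) =
      P + p * (d * d) * `|d| / (8 * Rmax ^+ 2) - p * `|d| * (`|d| ^+ 2 / (16 * Rmax ^+ 2)) by field; lra.
    rewrite dd; field; lra.
  rewrite e in lowI.
  rewrite -subr_ge0.
  have -> : p * (\int[Rdist s]_x pr (upd_sampled th r Rmax s x) r - P) - p ^+ 2 * `|d| ^+ 3 / (16 * Rmax ^+ 2)
     = p * (\int[Rdist s]_x pr (upd_sampled th r Rmax s x) r - (P + p * `|d| ^+ 3 / (16 * Rmax ^+ 2))) by ring.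
  by apply: mulr_ge0; [exact: ltW | rewrite subr_ge0].
have -> : \sum_(s < K) softmax th s * Rintegral (Rdist s) setT (fun x => pr (upd_sampled th r Rmax s x) r) - P
   = \sum_(s < K) softmax th s * (Rintegral (Rdist s) setT (fun x => pr (upd_sampled th r Rmax s x) r) - P).
  under [RHS]eq_bigr do rewrite mulrBr.
  by rewrite sumrB -mulr_suml (sum_softmax th astar) mul1r.
rewrite mulr_sumr; apply: ler_sum => s _.
apply: le_trans (each s).
by rewrite mulrC div1r.
Qed.

Theorem lemma1 (R : realType) (K : nat) (hK : (2 <= K)%N)
  (r : 'I_K -> R) (hr : forall a, 0 <= r a <= 1)
  (astar : 'I_K) (hastar : forall a, r a <= r astar)
  (Rmax : R) (hRmax : 0 < Rmax)
  (Rdist : 'I_K -> probability R R)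
  (hsupp : forall a, Rdist a [set x : R | Rmax < `|x|]%classic = 0%E)
  (hmean : forall a, (\int[Rdist a]_x (x%:E) = (r a)%:E)%E)
  (th : 'I_K -> R) (eta : R) (heta : 0 < eta) :
  (* part (1): true mean reward, constant step size eta *)
  ((forall s : 'I_K, pr (upd_mean th r eta s) r - pr th r >= 0) /\
   \sum_(s < K) softmax th s * pr (upd_mean th r eta s) r - pr th r
     >= eta / (1 + eta) * softmax th astar * (r astar - pr th r) ^+ 2)
  /\
  (* part (2): sampled reward, adaptive step size *)
  (let E := \sum_(s < K) softmax th s *
               Rintegral (Rdist s) setT (fun x => pr (upd_sampled th r Rmax s x) r) in
   E - pr th r >= 1 / (16 * Rmax ^+ 2) *
       \sum_(i < K) softmax th i ^+ 2 * `|r i - pr th r| ^+ 3 /\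
   1 / (16 * Rmax ^+ 2) * \sum_(i < K) softmax th i ^+ 2 * `|r i - pr th r| ^+ 3
     >= 1 / (16 * Rmax ^+ 2) * (gap r astar / (K%:R - 1)) *
        softmax th astar ^+ 2 * (r astar - pr th r) ^+ 2).
Proof.
split; first exact: (part1 r hr astar hastar th eta heta).
split; first exact: (part2a r hr astar Rmax hRmax Rdist hsupp hmean th).
have c0 : 0 <= 1 / (16 * Rmax ^+ 2).
  by apply: divr_ge0 => //; apply: mulr_ge0 => //; apply: exprn_ge0; exact: ltW.
have h := part2b hK r hr astar hastar th.
apply: (le_trans (y := 1 / (16 * Rmax ^+ 2) * (gap r astar / (K%:R - 1) *
        softmax th astar ^+ 2 * (r astar - pr th r) ^+ 2))).
  by rewrite !mulrA.
exact: ler_wpM2l.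
Qed.
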